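(* Let $\beta>1$. For each $t_0>0$ there exists a constant $C_1>0$ such that $$C_1\beta^{-m(t,u)}\le|t-u|\le\beta^{-m(t,u)}$$ for all $t,u\in\mathcal U\cap[t_0,1]$.
   Context: Let $\gamma=\beta-1$ if $\beta$ is an integer and $\gamma=\lfloor\beta\rfloor$ otherwise. $T_\beta(x)=\beta x-\lfloor\beta x\rfloor$ on $[0,1)$. For $x\in(0,1]$ the quasi-greedy $\beta$-expansion is the lexicographically largest sequence in $\{0,\dots,\gamma\}^{\mathbb N}$, not eventually zero, with $x=\sum_i a_i\beta^{-i}$. For $t,u\in(0,1]$ with quasi-greedy expansions $(t_i),(u_i)$, $m(t,u)=\sup\{k\ge1\colon t_i=u_i\text{ for all }i\in\{1,\dots,k\}\}$ is the length of the longest common prefix (taken as $0$ if $t_1\ne u_1$). For $0<t<1$ let $K(t)=\{x\in[0,1)\colon T_\beta^k(x)\notin(0,t)\ \forall k\ge0\}$, $K(0)=[0,1)$, $K(1)=\{0\}$. A parameter $t\in[0,1]$ is a bifurcation parameter if $t\in\{0,1\}$, or $0<t<1$ and for every $\delta>0$ there is $t'\in(t-\delta,t+\delta)$ with $K(t')\ne K(t)$; $\mathcal U$ is the set of bifurcation parameters in $[0,1)$. *)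

(* Defs.v *)
From Stdlib Require Import Reals Lra.
Open Scope R_scope.

Definition is_int (x : R) : Prop := exists z : Z, x = IZR z.

(* floor via Stdlib's Int_part (= up x - 1, the greatest integer <= x) *)
Definition floorR (x : R) : R := IZR (Int_part x).

Definition digit_ok (beta : R) (d : nat) : Prop :=
  (is_int beta -> INR d <= beta - 1) /\ (~ is_int beta -> INR d <= floorR beta).

Definition Tb (beta x : R) : R := beta * x - floorR (beta * x).

(* Sequences are 0-indexed: a i stands for the paper's a_(i+1). *)
Definition beta_expansion (beta x : R) (a : nat -> nat) : Prop :=
  (forall i, digit_ok beta (a i)) /\
  (forall n, exists k, (n <= k)%nat /\ a k <> 0%nat) /\
  infinite_sum (fun i => INR (a i) / beta ^ (S i)) x.

Definition lex_le (b a : nat -> nat) : Prop :=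
  (forall i, b i = a i) \/
  (exists n, (forall i, (i < n)%nat -> b i = a i) /\ (b n < a n)%nat).

Definition quasi_greedy (beta x : R) (a : nat -> nat) : Prop :=
  beta_expansion beta x a /\
  (forall b, beta_expansion beta x b -> lex_le b a).

(* m = length of the longest common prefix of a and b; None means infinite *)
Definition common_prefix (a b : nat -> nat) (m : option nat) : Prop :=
  match m with
  | None => forall i, a i = b i
  | Some k => (forall i, (i < k)%nat -> a i = b i) /\ a k <> b k
  end.

Definition bpow_neg (beta : R) (m : option nat) : R :=
  match m with
  | None => 0
  | Some k => / beta ^ k
  end.

Definition K (beta t x : R) : Prop :=
  (t = 0 /\ 0 <= x < 1) \/
  (t = 1 /\ x = 0) \/
  (0 < t < 1 /\ 0 <= x < 1 /\
     forall k : nat, ~ (0 < Nat.iter k (Tb beta) x < t)).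

(* t is a bifurcation parameter (perturbations t' range over [0,1]) *)
Definition bifurcation (beta t : R) : Prop :=
  t = 0 \/ t = 1 \/
  (0 < t < 1 /\
   forall delta, delta > 0 ->
     exists t', 0 <= t' <= 1 /\ t - delta < t' < t + delta /\
       ~ (forall x, K beta t' x <-> K beta t x)).

Definition in_U (beta t : R) : Prop := 0 <= t < 1 /\ bifurcation beta t.

(* Main.v *)
Require Import Defs.
From Stdlib Require Import Reals Lra Lia Classical ZArith.
Open Scope R_scope.

Fixpoint tl (beta x : R) (a : nat -> nat) (n : nat) : R :=
  match n with O => x | S n => beta * tl beta x a n - INR (a n) end.

Definition ser (beta : R) (a : nat -> nat) : nat -> R := fun i => INR (a i) / beta ^ S i.

Lemma infinite_sum_ext f g l : (forall i, f i = g i) -> infinite_sum f l -> infinite_sum g l.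
Proof.
  intros H Hs e He. destruct (Hs e He) as [N HN]. exists N. intros n Hn.
  rewrite (sum_eq g f n); auto.
Qed.

Lemma sum_shift1 beta a N : beta > 0 ->
  sum_f_R0 (ser beta a) (S N) = INR (a 0%nat) / beta + sum_f_R0 (ser beta (fun i => a (S i))) N / beta.
Proof.
  intros Hb. induction N.
  - simpl. unfold ser. simpl. field. lra.
  - change (sum_f_R0 (ser beta a) (S (S N))) with (sum_f_R0 (ser beta a) (S N) + ser beta a (S (S N))).
    rewrite IHN. simpl sum_f_R0 at 2. unfold ser. simpl.
    assert (beta ^ N > 0) by (apply pow_lt; lra). field. lra.
Qed.

Lemma sum_shift1_iff beta a x : beta > 0 ->
  (infinite_sum (ser beta a) x <->
   infinite_sum (ser beta (fun i => a (S i))) (beta * x - INR (a 0%nat))).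
Proof.
  intros Hb. split.
  - intros Hs e He. destruct (Hs (e / beta)) as [N HN].
    { apply Rdiv_lt_0_compat; lra. }
    exists N. intros n Hn. specialize (HN (S n) ltac:(lia)). rewrite sum_shift1 in HN by lra.
    unfold Rdist in *.
    replace (sum_f_R0 (ser beta (fun i => a (S i))) n - (beta * x - INR (a 0%nat)))
      with (beta * (INR (a 0%nat) / beta + sum_f_R0 (ser beta (fun i => a (S i))) n / beta - x))
      by (field; lra).
    rewrite Rabs_mult, Rabs_right by lra.
    apply Rmult_lt_reg_r with (/ beta). apply Rinv_0_lt_compat; lra.
    replace (beta * Rabs (INR (a 0%nat) / beta + sum_f_R0 (ser beta (fun i => a (S i))) n / beta - x) * / beta)
      with (Rabs (INR (a 0%nat) / beta + sum_f_R0 (ser beta (fun i => a (S i))) n / beta - x)) by (field; lra).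
    exact HN.
  - intros Hs e He. destruct (Hs (e * beta)) as [N HN].
    { apply Rmult_lt_0_compat; lra. }
    exists (S N). intros n Hn. destruct n as [|n]; [lia|].
    specialize (HN n ltac:(lia)). rewrite sum_shift1 by lra.
    unfold Rdist in *.
    replace (INR (a 0%nat) / beta + sum_f_R0 (ser beta (fun i => a (S i))) n / beta - x)
      with ((sum_f_R0 (ser beta (fun i => a (S i))) n - (beta * x - INR (a 0%nat))) / beta)
      by (field; lra).
    unfold Rdiv. rewrite Rabs_mult, (Rabs_right (/ beta)).
    2: { left; apply Rinv_0_lt_compat; lra. }
    apply Rmult_lt_reg_r with beta. lra.
    rewrite Rmult_assoc, Rinv_l, Rmult_1_r by lra. exact HN.
Qed.

Lemma tail_sum beta a x : beta > 0 -> infinite_sum (ser beta a) x ->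
  forall n, infinite_sum (ser beta (fun i => a (n + i)%nat)) (tl beta x a n).
Proof.
  intros Hb Hs n. induction n.
  - simpl. exact Hs.
  - apply (sum_shift1_iff beta (fun i => a (n + i)%nat)) in IHn; auto.
    simpl. rewrite Nat.add_0_r in IHn.
    revert IHn. apply infinite_sum_ext. intros i; unfold ser; rewrite Nat.add_succ_r; reflexivity.
Qed.

Lemma tail_sum_rev beta a x n : beta > 0 ->
  infinite_sum (ser beta (fun i => a (n + i)%nat)) (tl beta x a n) ->
  infinite_sum (ser beta a) x.
Proof.
  intros Hb. induction n; intros Hs.
  - simpl in Hs. exact Hs.
  - apply IHn. apply (sum_shift1_iff beta (fun i => a (n + i)%nat)); auto.
    rewrite Nat.add_0_r. simpl in Hs.
    revert Hs. apply infinite_sum_ext. intros i; unfold ser; rewrite Nat.add_succ_r; reflexivity.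
Qed.

Lemma lim_ge f l c N0 : infinite_sum f l -> (forall N, (N >= N0)%nat -> c <= sum_f_R0 f N) -> c <= l.
Proof.
  intros Hs H. destruct (Rle_or_lt c l) as [|Hlt]; auto.
  destruct (Hs (c - l)) as [N1 HN1]; [lra|].
  specialize (HN1 (max N0 N1) ltac:(lia)). specialize (H (max N0 N1) ltac:(lia)).
  unfold Rdist in HN1. apply Rabs_def2 in HN1. lra.
Qed.

Lemma sum_ge_term f k N : (forall i, 0 <= f i) -> (k <= N)%nat -> f k <= sum_f_R0 f N.
Proof.
  intros Hf Hk. induction N.
  - assert (k = 0%nat) by lia. subst. simpl. lra.
  - destruct (Nat.eq_dec k (S N)).
    + subst. simpl. pose proof (cond_pos_sum f N Hf). lra.
    + simpl. specialize (IHN ltac:(lia)). specialize (Hf (S N)). lra.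
Qed.

Lemma ser_nonneg beta a i : beta > 0 -> 0 <= ser beta a i.
Proof. intros. unfold ser. apply Rmult_le_pos. apply pos_INR. left; apply Rinv_0_lt_compat, pow_lt; lra. Qed.

Lemma expansion_pos beta a x : beta > 0 -> infinite_sum (ser beta a) x -> (exists k, a k <> 0%nat) -> 0 < x.
Proof.
  intros Hb Hs [k Hk].
  assert (0 < ser beta a k).
  { unfold ser. apply Rdiv_lt_0_compat. apply lt_0_INR; lia. apply pow_lt; lra. }
  assert (ser beta a k <= x); [|lra].
  apply (lim_ge _ _ _ k Hs). intros N HN. apply sum_ge_term; auto. intros; apply ser_nonneg; auto.
Qed.

Lemma tl_pos beta x a n : beta > 0 -> beta_expansion beta x a -> 0 < tl beta x a n.
Proof.
  intros Hb [Hd [Hnz Hs]]. apply (expansion_pos beta (fun i => a (n + i)%nat)); auto.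
  apply tail_sum; auto. destruct (Hnz n) as [k [Hk1 Hk2]]. exists (k - n)%nat.
  replace (n + (k - n))%nat with k by lia. auto.
Qed.

Lemma tl_agree beta x a b n : (forall i, (i < n)%nat -> a i = b i) ->
  forall k, (k <= n)%nat -> tl beta x a k = tl beta x b k.
Proof.
  intros H k. induction k; intros Hk; simpl; auto. rewrite IHk by lia. rewrite H by lia. auto.
Qed.

Lemma tl_diff beta t u a b m : (forall i, (i < m)%nat -> a i = b i) ->
  forall k, (k <= m)%nat -> tl beta t a k - tl beta u b k = beta ^ k * (t - u).
Proof.
  intros H k. induction k; intros Hk; simpl. lra.
  rewrite H by lia. specialize (IHk ltac:(lia)). rewrite Rmult_assoc, <- IHk. ring.
Qed.

Lemma tl_shift beta x a i k : tl beta x a (i + k) = tl beta (tl beta x a i) (fun n => a (i + n)%nat) k.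
Proof.
  induction k; simpl. rewrite Nat.add_0_r; auto.
  rewrite Nat.add_succ_r. simpl. rewrite IHk. auto.
Qed.

Lemma tl_ext beta x a b : (forall i, a i = b i) -> forall k, tl beta x a k = tl beta x b k.
Proof. intros H k; induction k; simpl; auto. rewrite IHk, H; auto. Qed.

Definition splice (a : nat -> nat) (n : nat) (c : nat -> nat) : nat -> nat :=
  fun i => if Nat.ltb i n then a i else c (i - n)%nat.

Lemma splice_lo a n c i : (i < n)%nat -> splice a n c i = a i.
Proof. intros H. unfold splice. destruct (Nat.ltb_spec i n); auto; lia. Qed.

Lemma splice_hi a n c i : splice a n c (n + i) = c i.
Proof. unfold splice. destruct (Nat.ltb_spec (n+i) n); [lia|]. f_equal; lia. Qed.

Lemma splice_exp beta x a n c : beta > 0 -> beta_expansion beta x a ->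
  beta_expansion beta (tl beta x a n) c -> beta_expansion beta x (splice a n c).
Proof.
  intros Hb [Ha1 [Ha2 Ha3]] [Hc1 [Hc2 Hc3]]. split; [|split].
  - intros i. unfold splice. destruct (Nat.ltb i n); auto.
  - intros N. destruct (Hc2 N) as [k [Hk1 Hk2]]. exists (n + k)%nat. split. lia.
    rewrite splice_hi. auto.
  - apply (tail_sum_rev beta _ x n Hb).
    rewrite <- (tl_agree beta x a (splice a n c) n) by (auto; intros; rewrite splice_lo; auto).
    revert Hc3. apply infinite_sum_ext. intros i. unfold ser. rewrite splice_hi. auto.
Qed.

Lemma lex_contra a b n : (forall i, (i < n)%nat -> b i = a i) -> (a n < b n)%nat -> ~ lex_le b a.
Proof.
  intros H Hn [Heq | [k [Hk1 Hk2]]].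
  - rewrite Heq in Hn. lia.
  - destruct (lt_eq_lt_dec k n) as [[Hlt|Heq]|Hgt].
    + rewrite H in Hk2 by auto. lia.
    + subst. lia.
    + rewrite Hk1 in Hn by auto. lia.
Qed.

Lemma tail_qg beta x a n : beta > 0 -> quasi_greedy beta x a ->
  quasi_greedy beta (tl beta x a n) (fun i => a (n + i)%nat).
Proof.
  intros Hb [[Ha1 [Ha2 Ha3]] Hmax]. split.
  - split; [|split]; auto.
    + intros N. destruct (Ha2 (n + N)%nat) as [k [Hk1 Hk2]]. exists (k - n)%nat. split. lia.
      replace (n + (k - n))%nat with k by lia. auto.
    + apply tail_sum; auto.
  - intros c Hc. pose proof (Hmax _ (splice_exp beta x a n c Hb (conj Ha1 (conj Ha2 Ha3)) Hc)) as Hl.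
    destruct Hl as [Heq | [k [Hk1 Hk2]]].
    + left. intros i. rewrite <- Heq, splice_hi. auto.
    + destruct (le_lt_dec n k) as [Hnk|Hkn].
      * right. exists (k - n)%nat. split.
        -- intros i Hi. rewrite <- splice_hi with (a := a) (n := n). apply Hk1. lia.
        -- rewrite <- splice_hi with (a := a) (n := n). replace (n + (k - n))%nat with k by lia. auto.
      * rewrite splice_lo in Hk2 by auto. lia.
Qed.

Lemma qg_unique beta x p q : quasi_greedy beta x p -> quasi_greedy beta x q -> forall i, p i = q i.
Proof.
  intros [Hp Hpm] [Hq Hqm]. pose proof (Hqm p Hp) as H1. pose proof (Hpm q Hq) as H2.
  destruct H1 as [H1|[n [Hn1 Hn2]]]; auto.
  destruct H2 as [H2|[k [Hk1 Hk2]]]; [intros; rewrite H2; auto|].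
  exfalso. destruct (lt_eq_lt_dec k n) as [[Hlt|Heq]|Hgt].
  + rewrite Hn1 in Hk2 by auto. lia.
  + subst. lia.
  + rewrite Hk1 in Hn2 by auto. lia.
Qed.

Definition cdig (w : R) : Z := (- Int_part (- w) - 1)%Z.

Lemma cdig_spec w : IZR (cdig w) < w <= IZR (cdig w) + 1.
Proof.
  unfold cdig. destruct (base_Int_part (- w)) as [H1 H2].
  rewrite minus_IZR, opp_IZR. lra.
Qed.

Fixpoint rem (beta z : R) (n : nat) : R :=
  match n with O => z | S n => beta * rem beta z n - IZR (cdig (beta * rem beta z n)) end.

Definition dg beta z n := Z.to_nat (cdig (beta * rem beta z n)).

Lemma rem_bounds beta z : 1 < beta -> 0 < z <= 1 -> forall n, 0 < rem beta z n <= 1.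
Proof.
  intros Hb Hz n. induction n; simpl; auto.
  pose proof (cdig_spec (beta * rem beta z n)). lra.
Qed.

Lemma cdig_nonneg w : 0 < w -> (0 <= cdig w)%Z.
Proof.
  intros Hw. pose proof (cdig_spec w). assert (-1 < cdig w)%Z; [|lia].
  apply lt_IZR. lra.
Qed.

Lemma INR_toZ c : (0 <= c)%Z -> INR (Z.to_nat c) = IZR c.
Proof. intros H. rewrite INR_IZR_INZ, Z2Nat.id; auto. Qed.

Lemma dg_INR beta z n : 1 < beta -> 0 < z <= 1 -> INR (dg beta z n) = IZR (cdig (beta * rem beta z n)).
Proof.
  intros Hb Hz. unfold dg. apply INR_toZ. apply cdig_nonneg.
  pose proof (rem_bounds beta z Hb Hz n). nra.
Qed.

Lemma tl_rem beta z : 1 < beta -> 0 < z <= 1 -> forall n, tl beta z (dg beta z) n = rem beta z n.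
Proof.
  intros Hb Hz n. induction n; simpl; auto. rewrite IHn, dg_INR; auto.
Qed.

Lemma sum_rem beta z : 1 < beta -> 0 < z <= 1 -> forall N,
  sum_f_R0 (ser beta (dg beta z)) N = z - rem beta z (S N) / beta ^ (S N).
Proof.
  intros Hb Hz N. induction N.
  - simpl. unfold ser. rewrite dg_INR by auto. simpl. field. lra.
  - simpl sum_f_R0. rewrite IHN. unfold ser. rewrite dg_INR by auto.
    change (rem beta z (S (S N))) with (beta * rem beta z (S N) - IZR (cdig (beta * rem beta z (S N)))).
    assert (beta ^ N > 0) by (apply pow_lt; lra). simpl. field. lra.
Qed.

Lemma digit_ok_of beta c : (IZR c < beta)%R -> (0 <= c)%Z -> digit_ok beta (Z.to_nat c).
Proof.
  intros H H0. rewrite <- (INR_toZ c H0) in H. split.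
  - intros [z Hz]. rewrite Hz in H. rewrite INR_IZR_INZ in *. apply lt_IZR in H.
    rewrite Hz, <- minus_IZR. apply IZR_le. lia.
  - intros _. unfold floorR. destruct (base_Int_part beta) as [H1 H2].
    rewrite INR_IZR_INZ in *. assert (Z.of_nat (Z.to_nat c) < Int_part beta + 1)%Z.
    { apply lt_IZR. rewrite plus_IZR. lra. }
    apply IZR_le. lia.
Qed.

Lemma pow_big beta y : 1 < beta -> 0 < y -> exists N, / beta ^ N < y.
Proof.
  intros Hb Hy. destruct (pow_lt_1_zero (/ beta)) with (y := y) as [N HN]; auto.
  { rewrite Rabs_right. rewrite <- Rinv_1. apply Rinv_lt_contravar; lra. left; apply Rinv_0_lt_compat; lra. }
  exists N. specialize (HN N ltac:(lia)). rewrite pow_inv in HN.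
  rewrite Rabs_right in HN; auto. left; apply Rinv_0_lt_compat, pow_lt; lra.
Qed.

Lemma exp_exists beta z : 1 < beta -> 0 < z <= 1 -> beta_expansion beta z (dg beta z).
Proof.
  intros Hb Hz. split; [|split].
  - intros i. unfold dg. pose proof (rem_bounds beta z Hb Hz i).
    pose proof (cdig_spec (beta * rem beta z i)). apply digit_ok_of. nra.
    apply cdig_nonneg. nra.
  - intros n. apply NNPP. intros Hno.
    assert (Hz0 : forall k, dg beta z (n + k) = 0%nat).
    { intros k. apply NNPP. intros Hk. apply Hno. exists (n + k)%nat. split; auto. lia. }
    assert (Hr : forall k, rem beta z (n + k) = beta ^ k * rem beta z n).
    { intros k. induction k. simpl. rewrite Nat.add_0_r. ring.
      rewrite Nat.add_succ_r. simpl. rewrite <- dg_INR by auto. rewrite Hz0, IHk. simpl. ring. }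
    pose proof (rem_bounds beta z Hb Hz n) as Hn.
    destruct (pow_big beta (rem beta z n) Hb ltac:(lra)) as [N HN].
    pose proof (rem_bounds beta z Hb Hz (n + N)) as HnN. rewrite Hr in HnN.
    assert (beta ^ N > 0) by (apply pow_lt; lra).
    apply (Rmult_lt_compat_l (beta ^ N)) in HN; auto. rewrite Rinv_r in HN by lra. lra.
  - change (infinite_sum (ser beta (dg beta z)) z).
    intros e He. destruct (pow_big beta e Hb He) as [N HN]. exists N. intros n Hn.
    rewrite sum_rem by auto. unfold Rdist.
    replace (z - rem beta z (S n) / beta ^ S n - z) with (- (rem beta z (S n) / beta ^ S n)) by ring.
    rewrite Rabs_Ropp. pose proof (rem_bounds beta z Hb Hz (S n)).
    assert (beta ^ S n > 0) by (apply pow_lt; lra).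
    rewrite Rabs_right. 2: { left. apply Rdiv_lt_0_compat; lra. }
    apply Rle_lt_trans with (/ beta ^ N); auto.
    apply Rle_trans with (/ beta ^ S n).
    { unfold Rdiv. rewrite <- (Rmult_1_l (/ beta ^ S n)) at 2. apply Rmult_le_compat_r; [left; apply Rinv_0_lt_compat|]; lra. }
    apply Rinv_le_contravar. apply pow_lt; lra. apply Rle_pow; [lra|lia].
Qed.

Lemma dg0_gt beta z (n : nat) : 1 < beta -> 0 < z <= 1 -> INR n + 1 < beta * z -> (n < dg beta z 0)%nat.
Proof.
  intros Hb Hz H. apply INR_lt. rewrite dg_INR by auto. simpl.
  pose proof (cdig_spec (beta * z)). lra.
Qed.

Lemma tl_le1 beta x a : 1 < beta -> 0 < x <= 1 -> quasi_greedy beta x a -> forall n, tl beta x a n <= 1.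
Proof.
  intros Hb Hx Hq n. induction n; simpl. lra.
  destruct (Rle_or_lt (beta * tl beta x a n - INR (a n)) 1) as [|Hgt]; auto. exfalso.
  set (z := tl beta x a n) in *.
  assert (Hz : 0 < z <= 1). { split; auto. apply tl_pos. lra. apply Hq. }
  pose proof (exp_exists beta z Hb Hz) as He.
  pose proof (splice_exp beta x a n (dg beta z) ltac:(lra) (proj1 Hq) He) as Hs.
  apply (lex_contra a (splice a n (dg beta z)) n).
  - intros i Hi. apply splice_lo; auto.
  - replace (splice a n (dg beta z) n) with (dg beta z 0) by (rewrite <- splice_hi with (a := a) (n := n); f_equal; lia). apply dg0_gt; auto. lra.
  - apply (proj2 Hq). auto.
Qed.

Lemma Tb_eq beta w (n : nat) f : beta * w = INR n + f -> 0 <= f < 1 -> Tb beta w = f.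
Proof.
  intros H Hf. unfold Tb, floorR, Int_part. rewrite H.
  rewrite <- (tech_up (INR n + f) (Z.of_nat n + 1)).
  - replace (Z.of_nat n + 1 - 1)%Z with (Z.of_nat n) by lia. rewrite <- INR_IZR_INZ. ring.
  - rewrite plus_IZR, <- INR_IZR_INZ. lra.
  - rewrite plus_IZR, <- INR_IZR_INZ. lra.
Qed.

Lemma iter_tl beta t a eps k :
  (forall i, (1 <= i <= k)%nat -> 0 <= tl beta t a i + beta ^ i * eps < 1) ->
  Nat.iter k (Tb beta) (t + eps) = tl beta t a k + beta ^ k * eps.
Proof.
  induction k; intros H.
  - simpl. ring.
  - change (Nat.iter (S k) (Tb beta) (t + eps)) with (Tb beta (Nat.iter k (Tb beta) (t + eps))).
    rewrite IHk by (intros i Hi; apply H; lia).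
    apply (Tb_eq beta _ (a k)).
    + simpl. ring.
    + apply (H (S k)). lia.
Qed.

Fixpoint mn (g : nat -> R) (k : nat) : R :=
  match k with O => g O | S k => Rmin (mn g k) (g (S k)) end.

Lemma mn_pos g k : (forall i, (i <= k)%nat -> 0 < g i) -> 0 < mn g k.
Proof.
  induction k; intros H; simpl. apply H; lia.
  apply Rmin_glb_lt. apply IHk; intros; apply H; lia. apply H; lia.
Qed.

Lemma mn_le g k : forall i, (i <= k)%nat -> mn g k <= g i.
Proof.
  induction k; intros i Hi; simpl.
  - assert (i = 0%nat) by lia. subst. lra.
  - destruct (Nat.eq_dec i (S k)). subst. apply Rmin_r.
    eapply Rle_trans. apply Rmin_l. apply IHk. lia.
Qed.

Lemma K_mid beta s x : 0 < s < 1 ->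
  (K beta s x <-> (0 <= x < 1 /\ forall k, ~ (0 < Nat.iter k (Tb beta) x < s))).
Proof.
  intros Hs. unfold K. split.
  - intros [[H1 H2]|[[H1 H2]|[H1 H2]]]; try lra. auto.
  - intros H. right; right. auto.
Qed.

Lemma structure beta t a j : 1 < beta -> in_U beta t -> 0 < t -> quasi_greedy beta t a ->
  (1 <= j)%nat -> tl beta t a j < t -> exists i, (1 <= i < j)%nat /\ tl beta t a i = 1.
Proof.
  intros Hb HU Ht Hq Hj Hxj. apply NNPP. intros Hno.
  destruct HU as [[_ Ht1] Hbif].
  set (x := tl beta t a) in *.
  assert (Hx1 : forall i, x i <= 1) by (intros; apply tl_le1; auto; lra).
  assert (Hx0 : forall i, 0 < x i) by (intros; apply tl_pos; [lra | apply Hq]).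
  assert (Hlt1 : forall i, (1 <= i <= j)%nat -> x i < 1).
  { intros i Hi. destruct (Nat.eq_dec i j). subst. lra.
    destruct (Hx1 i) as [|He]; auto. exfalso. apply Hno. exists i. split; auto. lia. }
  set (g := fun i => Rmin (x (S i)) (1 - x (S i))).
  set (mu := mn g (j - 1)).
  assert (Hmu0 : 0 < mu).
  { apply mn_pos. intros i Hi. unfold g. apply Rmin_glb_lt. auto.
    pose proof (Hlt1 (S i) ltac:(lia)). lra. }
  assert (Hmu : forall i, (1 <= i <= j)%nat -> mu <= x i /\ mu <= 1 - x i).
  { intros i Hi. pose proof (mn_le g (j - 1) (i - 1) ltac:(lia)) as Hm.
    unfold g in Hm. replace (S (i - 1)) with i in Hm by lia. fold mu in Hm.
    split; eapply Rle_trans; eauto. apply Rmin_l. apply Rmin_r. }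
  set (D := Rmin (Rmin mu (t - x j)) (Rmin t (1 - t))).
  assert (HD0 : 0 < D).
  { unfold D. repeat apply Rmin_glb_lt; lra. }
  assert (HDmu : D <= mu) by (unfold D; eapply Rle_trans; apply Rmin_l).
  assert (HDx : D <= t - x j) by (unfold D; eapply Rle_trans; [apply Rmin_l| apply Rmin_r]).
  assert (HDt : D <= t) by (unfold D; eapply Rle_trans; [apply Rmin_r| apply Rmin_l]).
  assert (HDt1 : D <= 1 - t) by (unfold D; eapply Rle_trans; [apply Rmin_r| apply Rmin_r]).
  assert (Hbj : 1 <= beta ^ j) by (apply pow_R1_Rle; lra).
  set (delta := D / (2 * beta ^ j)).
  assert (Hd0 : 0 < delta) by (unfold delta; apply Rdiv_lt_0_compat; lra).
  assert (Hdeq : beta ^ j * delta = D / 2) by (unfold delta; field; lra).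
  assert (HdD : delta <= D / 2).
  { unfold delta. unfold Rdiv. apply Rmult_le_compat_l. lra.
    apply Rinv_le_contravar; lra. }
  assert (Hsmall : forall eps i, Rabs eps < delta -> (i <= j)%nat -> Rabs (beta ^ i * eps) < D / 2).
  { intros eps i He Hi. rewrite Rabs_mult, (Rabs_right (beta ^ i)).
    2: { left; apply pow_lt; lra. }
    apply Rle_lt_trans with (beta ^ j * Rabs eps).
    apply Rmult_le_compat_r. apply Rabs_pos. apply Rle_pow; [lra|lia].
    rewrite <- Hdeq. apply Rmult_lt_compat_l; lra. }
  assert (Hiter : forall eps, Rabs eps < delta ->
            Nat.iter j (Tb beta) (t + eps) = x j + beta ^ j * eps).
  { intros eps He. apply iter_tl. intros i Hi.
    pose proof (Hsmall eps i He ltac:(lia)) as Hs. apply Rabs_def2 in Hs.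
    pose proof (Hmu i Hi). change (tl beta t a i) with (x i). lra. }
  assert (Key : forall t' y, Rabs (t' - t) < delta -> Rmin t t' <= y < Rmax t t' ->
            0 < Nat.iter j (Tb beta) y < Rmin t t').
  { intros t' y Ht' Hy. apply Rabs_def2 in Ht'.
    replace y with (t + (y - t)) by ring.
    destruct (Rle_dec t t') as [Hle|Hgt].
    - rewrite Rmin_left, Rmax_right in * by lra.
      assert (Hye : Rabs (y - t) < delta) by (apply Rabs_def1; lra).
      rewrite Hiter by auto.
      pose proof (Hsmall _ j Hye (le_n _)) as Hs. apply Rabs_def2 in Hs.
      assert (0 <= beta ^ j * (y - t)) by (apply Rmult_le_pos; [left; apply pow_lt|]; lra).
      pose proof (Hmu j ltac:(lia)). lra.
    - rewrite Rmin_right, Rmax_left in * by lra.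
      assert (Hye : Rabs (y - t) < delta) by (apply Rabs_def1; lra).
      rewrite Hiter by auto.
      pose proof (Hsmall _ j Hye (le_n _)) as Hs. apply Rabs_def2 in Hs.
      assert (beta ^ j * (y - t) <= 0).
      { rewrite <- (Rmult_0_r (beta ^ j)). apply Rmult_le_compat_l; [left; apply pow_lt|]; lra. }
      pose proof (Hmu j ltac:(lia)). lra. }
  destruct Hbif as [H0|[H1|[_ Hbif]]]; try lra.
  destruct (Hbif delta Hd0) as [t' [Ht'01 [Ht'd Hneq]]].
  apply Hneq. intros y.
  assert (Ht'a : Rabs (t' - t) < delta) by (apply Rabs_def1; lra).
  assert (Ht'r : 0 < t' < 1) by lra.
  assert (Heq : (forall k, ~ (0 < Nat.iter k (Tb beta) y < Rmin t t')) <->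
                (forall k, ~ (0 < Nat.iter k (Tb beta) y < Rmax t t'))).
  { split.
    - intros H k Hk. destruct (Rlt_le_dec (Nat.iter k (Tb beta) y) (Rmin t t')) as [Hl|Hl].
      + apply (H k). lra.
      + apply (H (j + k)%nat). rewrite Nat.iter_add. apply Key; auto. lra.
    - intros H k Hk. apply (H k). pose proof (Rmin_l t t'). pose proof (Rmax_l t t'). lra. }
  rewrite (K_mid beta t' y Ht'r), (K_mid beta t y ltac:(lra)).
  destruct (Rle_dec t t') as [Hle|Hgt].
  - rewrite Rmin_left, Rmax_right in Heq by lra. tauto.
  - rewrite Rmin_right, Rmax_left in Heq by lra. tauto.
Qed.

Definition cprop beta t0 c := forall al, quasi_greedy beta 1 al -> forall k,
  (forall i, (i < k)%nat -> t0 <= tl beta 1 al i) -> c <= tl beta 1 al k.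

Lemma const_c beta t0 : 1 < beta -> 0 < t0 ->
  exists c, 0 < c /\ c <= t0 /\ c <= 1 /\ cprop beta t0 c.
Proof.
  intros Hb Ht0.
  destruct (classic (exists al, quasi_greedy beta 1 al)) as [[al Hal]|Hno].
  - assert (Hpos : forall k, 0 < tl beta 1 al k) by (intros; apply tl_pos; [lra|apply Hal]).
    destruct (classic (exists k, tl beta 1 al k < t0)) as [[k Hk]|Hall].
    + exists (Rmin (Rmin t0 1) (mn (tl beta 1 al) k)). repeat split.
      * apply Rmin_glb_lt. apply Rmin_glb_lt; lra. apply mn_pos; auto.
      * eapply Rle_trans; apply Rmin_l.
      * eapply Rle_trans; [apply Rmin_l| apply Rmin_r].
      * intros al' Hal' k' Hk'.
        rewrite <- (tl_ext beta 1 al al' (qg_unique beta 1 al al' Hal Hal')) in *.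
        destruct (le_lt_dec k' k) as [Hle|Hlt].
        -- eapply Rle_trans. apply Rmin_r. apply mn_le; auto.
        -- specialize (Hk' k Hlt). rewrite <- (tl_ext beta 1 al al' (qg_unique beta 1 al al' Hal Hal')) in Hk'. lra.
    + exists (Rmin t0 1). repeat split.
      * apply Rmin_glb_lt; lra.
      * apply Rmin_l.
      * apply Rmin_r.
      * intros al' Hal' k' Hk'.
        rewrite <- (tl_ext beta 1 al al' (qg_unique beta 1 al al' Hal Hal')).
        eapply Rle_trans. apply Rmin_l. apply Rnot_lt_le. intros H. apply Hall. eauto.
  - exists (Rmin t0 1). repeat split.
    * apply Rmin_glb_lt; lra.
    * apply Rmin_l.
    * apply Rmin_r.
    * intros al Hal. exfalso. apply Hno. eauto.
Qed.

Lemma core beta t0 c t u a b m : 1 < beta -> 0 < t0 -> c <= t0 -> cprop beta t0 c ->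
  in_U beta t -> t0 <= t -> in_U beta u -> t0 <= u ->
  quasi_greedy beta t a -> quasi_greedy beta u b ->
  (forall i, (i < m)%nat -> a i = b i) -> (b m < a m)%nat ->
  c / beta ^ (S m) <= t - u.
Proof.
  intros Hb Ht0 Hct0 Hc HUt Ht HUu Hu Hqa Hqb Hpre Hm.
  pose proof HUt as [[_ Ht1] _]. pose proof HUu as [[_ Hu1] _].
  set (x := tl beta t a). set (y := tl beta u b).
  assert (Hdiff : forall k, (k <= m)%nat -> x k - y k = beta ^ k * (t - u))
    by (apply tl_diff; auto).
  assert (HxS : x (S m) - y (S m) = beta * (x m - y m) - (INR (a m) - INR (b m))) by (unfold x, y; simpl; ring).
  assert (Hab : INR (b m) + 1 <= INR (a m)) by (rewrite <- S_INR; apply le_INR; lia).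
  assert (Hy1 : forall k, y k <= 1) by (intros; apply tl_le1; auto; lra).
  assert (Hx1 : forall k, x k <= 1) by (intros; apply tl_le1; auto; lra).
  assert (Hx0 : forall k, 0 < x k) by (intros; apply tl_pos; [lra|apply Hqa]).
  assert (HE : beta ^ (S m) * (t - u) >= x (S m)).
  { rewrite (Hdiff m (le_n _)) in HxS. simpl. pose proof (Hy1 (S m)). lra. }
  assert (Hbm : beta ^ S m > 0) by (apply pow_lt; lra).
  assert (Htu : t - u > 0).
  { pose proof (Hx0 (S m)). destruct (Rle_or_lt (t - u) 0); auto.
    assert (beta ^ S m * (t - u) <= 0). { rewrite <- (Rmult_0_r (beta ^ S m)). apply Rmult_le_compat_l; lra. }
    lra. }
  assert (Hclaim : c <= x (S m)).
  { destruct (Rle_or_lt t0 (x (S m))) as [Hge|Hlt]; [lra|].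
    destruct (structure beta t a (S m) Hb HUt ltac:(lra) Hqa ltac:(lia) ltac:(unfold x in Hlt; lra))
      as [i [Hi Hxi]].
    pose proof (tail_qg beta t a i ltac:(lra) Hqa) as Hqi. rewrite Hxi in Hqi.
    replace (S m) with (i + (S m - i))%nat by lia. unfold x. rewrite tl_shift, Hxi.
    apply Hc; auto. intros i' Hi'. rewrite <- Hxi, <- tl_shift. fold x.
    set (j := (i + i')%nat).
    assert (Hjm : (1 <= j <= m)%nat) by (unfold j; lia).
    assert (Hyj : u <= y j).
    { destruct (Rle_or_lt u (y j)) as [|Hyl]; auto. exfalso.
      destruct (structure beta u b j Hb HUu ltac:(lra) Hqb ltac:(lia) Hyl) as [i'' [Hi'' Hyi]].
      pose proof (Hdiff i'' ltac:(lia)). fold y in Hyi.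
      assert (beta ^ i'' * (t - u) > 0) by (apply Rmult_lt_0_compat; [apply pow_lt|]; lra).
      pose proof (Hx1 i''). lra. }
    pose proof (Hdiff j ltac:(lia)).
    assert (beta ^ j * (t - u) > 0) by (apply Rmult_lt_0_compat; [apply pow_lt|]; lra).
    lra. }
  apply Rmult_le_reg_l with (beta ^ S m); auto.
  replace (beta ^ S m * (c / beta ^ S m)) with c by (field; lra). lra.
Qed.

Theorem mainTheorem8 (beta : R) (hbeta : 1 < beta) (t0 : R) (ht0 : 0 < t0) :
  exists C1 : R, 0 < C1 /\
    forall (t u : R) (a b : nat -> nat) (m : option nat),
      in_U beta t -> t0 <= t <= 1 ->
      in_U beta u -> t0 <= u <= 1 ->
      quasi_greedy beta t a -> quasi_greedy beta u b ->
      common_prefix a b m ->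
      C1 * bpow_neg beta m <= Rabs (t - u) <= bpow_neg beta m.
Proof.
  destruct (const_c beta t0 hbeta ht0) as [c [Hc0 [Hct0 [Hc1 Hc]]]].
  exists (c / beta). split. apply Rdiv_lt_0_compat; lra.
  intros t u a b m HUt Ht HUu Hu Hqa Hqb Hcp.
  destruct m as [m|].
  - destruct Hcp as [Hpre Hne]. simpl bpow_neg.
    assert (Hbm : beta ^ m > 0) by (apply pow_lt; lra).
    pose proof HUt as [[_ Ht1] _]. pose proof HUu as [[_ Hu1] _].
    split.
    + replace (c / beta * / beta ^ m) with (c / beta ^ S m) by (simpl; field; lra).
      destruct (lt_eq_lt_dec (a m) (b m)) as [[Hlt|Heq]|Hgt]; [|congruence|].
      * rewrite Rabs_minus_sym. eapply Rle_trans.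
        apply (core beta t0 c u t b a m); auto; try lra. intros; symmetry; auto.
        apply Rle_abs.
      * eapply Rle_trans. apply (core beta t0 c t u a b m); auto; try lra. apply Rle_abs.
    + pose proof (tl_diff beta t u a b m Hpre m (le_n _)) as Hd.
      assert (Hx : 0 < tl beta t a m <= 1) by (split; [apply tl_pos; [lra|apply Hqa] | apply tl_le1; auto; lra]).
      assert (Hy : 0 < tl beta u b m <= 1) by (split; [apply tl_pos; [lra|apply Hqb] | apply tl_le1; auto; lra]).
      replace (t - u) with ((tl beta t a m - tl beta u b m) / beta ^ m) by (rewrite Hd; field; lra).
      unfold Rdiv. rewrite Rabs_mult, (Rabs_right (/ beta ^ m)).
      2: { left; apply Rinv_0_lt_compat; lra. }
      rewrite <- (Rmult_1_l (/ beta ^ m)) at 2. apply Rmult_le_compat_r.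
      left; apply Rinv_0_lt_compat; lra. apply Rabs_le. lra.
  - simpl in Hcp. simpl bpow_neg.
    assert (t = u).
    { apply (uniqueness_sum (ser beta a)). apply Hqa.
      apply (infinite_sum_ext (ser beta b)). intros i; unfold ser; rewrite Hcp; auto. apply Hqb. }
    subst. replace (u - u) with 0 by ring. rewrite Rabs_R0. lra.
Qed.
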